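(* Let $k\ge 1$ and let $\mathcal{H}_k=(V_k,\mathcal{E}_k)$ be a $k$-uniform hypergraph that has no proper $2$-coloring. Let $D_k$ be the directed graph with vertex set $V_k\cup U_k\cup\{s\}$, where $U_k=\{u_E: E\in\mathcal{E}_k\}$ is a set of new vertices, one for each hyperedge, and $s$ is a new vertex, and whose arcs are $sv$ for every $v\in V_k$ and $vu_E$ for every $v\in V_k$ and $E\in\mathcal{E}_k$ with $v\in E$. Then $D_k$ is acyclic, every $u\in U_k$ satisfies $\lambda_{D_k}(s,u)=k$, and $D_k$ contains no two arc-disjoint $(s,U_k)$-arborescences.
   Context: A hypergraph $(V,\mathcal{E})$ is $k$-uniform if every hyperedge has exactly $k$ vertices; a $2$-coloring of $V$ is proper if no hyperedge is monochromatic. $\lambda_D(s,v)$ is the maximum number of arc-disjoint directed $(s,v)$-paths in $D$. An $s$-arborescence is an acyclic subgraph $F=(V'\cup\{s\},A')$ in which every vertex of $V'$ has in-degree exactly $1$; it is an $(s,U)$-arborescence if it contains all vertices of $U$. *)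

(* Defs.v *)
From mathcomp Require Import all_boot.
Set Implicit Arguments. Unset Strict Implicit. Unset Printing Implicit Defensive.

Definition uniform (V : finType) (E : {set {set V}}) (k : nat) : Prop :=
  forall e, e \in E -> #|e| = k.

Definition monochromatic (V : finType) (c : V -> bool) (e : {set V}) : Prop :=
  forall x y, x \in e -> y \in e -> c x = c y.

Definition proper_2coloring (V : finType) (E : {set {set V}}) (c : V -> bool) : Prop :=
  forall e, e \in E -> ~ monochromatic c e.

Definition acyclic_rel (T : finType) (arc : rel T) : Prop :=
  forall (x : T) (p : seq T), path arc x p -> last x p = x -> p = [::].

Section Digraph.
Variables (T : finType) (arc : rel T).


Definition walk_arcs (x : T) (p : seq T) : seq (T * T) := zip (x :: p) p.

Definition dipath (s v : T) (p : seq T) : Prop :=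
  [/\ path arc s p, last s p = v & uniq (s :: p)].

Definition arc_disjoint_paths (s v : T) (ps : seq (seq T)) : Prop :=
  (forall p, p \in ps -> dipath s v p) /\
  (forall i j, i < j -> j < size ps ->
     forall a, a \in walk_arcs s (nth [::] ps i) -> a \notin walk_arcs s (nth [::] ps j)).

Definition lambda_eq (s v : T) (n : nat) : Prop :=
  (exists ps, arc_disjoint_paths s v ps /\ size ps = n) /\
  (forall ps, arc_disjoint_paths s v ps -> size ps <= n).

Definition s_arborescence (s : T) (V' : {set T}) (A' : {set T * T}) : Prop :=
  [/\ s \notin V',
      (forall a, a \in A' -> arc a.1 a.2),
      (forall a, a \in A' -> (a.1 \in s |: V') && (a.2 \in s |: V')),
      acyclic_rel (fun x y => (x, y) \in A')
    & forall v, v \in V' -> #|[set a in A' | a.2 == v]| = 1].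

Definition sU_arborescence (s : T) (U : {set T}) (V' : {set T}) (A' : {set T * T}) : Prop :=
  s_arborescence s V' A' /\ U \subset s |: V'.

End Digraph.

(* Vertices: None = s ; Some (inl v) = v in V ; Some (inr e) = u_e for e in E. *)
Definition Dvert (V : finType) (E : {set {set V}}) : finType :=
  option (V + {e : {set V} | e \in E})%type.

Definition Dk_arc (V : finType) (E : {set {set V}}) : rel (Dvert E) :=
  fun x y =>
    match x, y with
    | None, Some (inl _) => true
    | Some (inl v), Some (inr e) => v \in val e
    | _, _ => false
    end.

Definition Dk_s (V : finType) (E : {set {set V}}) : Dvert E := None.

Definition Dk_U (V : finType) (E : {set {set V}}) : {set Dvert E} :=
  [set x : Dvert E | if x is Some (inr _) then true else false].

(* Main.v *)
Require Import Defs.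
From mathcomp Require Import all_boot.
Set Implicit Arguments. Unset Strict Implicit. Unset Printing Implicit Defensive.

Section Aux.
Variables (V : finType) (E : {set {set V}}).

Definition rk (x : Dvert E) : nat :=
  match x with None => 0 | Some (inl _) => 1 | Some (inr _) => 2 end.

Lemma arc_rk x y : Dk_arc x y -> rk x < rk y.
Proof. by case: x => [[a|a]|]; case: y => [[b|b]|]. Qed.

Lemma path_rk x p : path (@Dk_arc V E) x p -> p != [::] -> rk x < rk (last x p).
Proof.
elim: p x => [//|y p IH] x /= /andP[Hxy Hp] _.
case: p IH Hp => [|z p] IH Hp; first exact: arc_rk.
apply: ltn_trans (arc_rk Hxy) (IH _ Hp _) => //.
Qed.

Lemma acyc : acyclic_rel (@Dk_arc V E).
Proof.
move=> x p Hp Hl; apply/eqP; apply/negPn/negP => Hn.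
by have := path_rk Hp Hn; rewrite Hl ltnn.
Qed.

Lemma shape (ee : {e : {set V} | e \in E}) p :
  dipath (@Dk_arc V E) (Dk_s E) (Some (inr ee)) p ->
  exists v, v \in val ee /\ p = [:: Some (inl v); Some (inr ee)].
Proof.
case=> Hp Hl _; case: p Hp Hl => [//|x p] /=.
case: x => [[v|f]|] //= Hp.
case: p Hp => [//|y p] /=.
case: y => [[w|f]|] //= /andP[Hvf Hp].
case: p Hp => [|z p] /=; last by case: z.
move=> _ Hw; have Hf : f = ee. have := congr1 (fun x : Dvert E => if x is Some (inr g) then Some g else None) Hw. by case.  by rewrite -Hf; exists v.
Qed.

End Aux.

Theorem theorem10 (k : nat) (V : finType) (E : {set {set V}}) :
  0 < k ->
  uniform E k ->
  (forall c : V -> bool, ~ proper_2coloring E c) ->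
  [/\ acyclic_rel (@Dk_arc V E),
      (forall u, u \in Dk_U E -> lambda_eq (@Dk_arc V E) (Dk_s E) u k)
    & ~ (exists (V1 V2 : {set Dvert E}) (A1 A2 : {set Dvert E * Dvert E}),
           [/\ sU_arborescence (@Dk_arc V E) (Dk_s E) (Dk_U E) V1 A1,
               sU_arborescence (@Dk_arc V E) (Dk_s E) (Dk_U E) V2 A2
             & [disjoint A1 & A2]])].
Proof.
move=> k0 Hunif Hcol; split.
- exact: acyc.
- move=> [[a|ee]|]; rewrite inE //= => _.
  have Hk : #|val ee| = k by apply: Hunif; exact: valP.
  have [x0 _] : exists x0, x0 \in val ee by apply/card_gt0P; rewrite Hk.
  split.
  + exists [seq [:: Some (inl v); Some (inr ee)] | v <- enum (val ee)].
    rewrite size_map -cardE Hk; split => //; split.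
    * move=> p /mapP[v]; rewrite mem_enum => Hv ->.
      by split => //=; rewrite Hv.
    * move=> i j Hij; rewrite size_map => Hj.
      have Hi := ltn_trans Hij Hj.
      rewrite !(nth_map x0) //= => a.
      have Hne : nth x0 (enum (val ee)) i != nth x0 (enum (val ee)) j.
        by rewrite nth_uniq ?enum_uniq // neq_ltn Hij.
      rewrite !inE => /orP[/eqP->|/eqP->]; apply/negP; rewrite /= !xpair_eqE /= ?eqxx ?andbT ?orbF /=.
      - by move/eqP => [] /eqP; rewrite (negbTE Hne).
      - by move/eqP => [] /eqP; rewrite (negbTE Hne).
  + move=> ps [Hd Hdis].
    pose g (p : seq (Dvert E)) := if p is Some (inl v) :: _ then v else x0.
    have Hsh : forall p, p \in ps -> g p \in val ee /\ p = [:: Some (inl (g p)); Some (inr ee)].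
      move=> p /Hd /shape [v [Hv ->]]; by split.
    rewrite -Hk -(size_map g) cardE; apply: uniq_leq_size.
    * apply/(uniqP x0) => i j; rewrite !inE size_map => Hi Hj.
      rewrite !(nth_map [::]) // => Heq.
      have key : forall i j, i < j -> j < size ps -> g (nth [::] ps i) != g (nth [::] ps j).
        move=> i' j' Hij' Hj'; apply/eqP => Hg.
        have Hi' := ltn_trans Hij' Hj'.
        have := Hdis _ _ Hij' Hj' (None, Some (inl (g (nth [::] ps i')))).
        rewrite (Hsh _ (mem_nth _ Hi')).2 (Hsh _ (mem_nth _ Hj')).2 /= Hg.
        by rewrite !inE eqxx /= => /(_ isT).
      case: (ltngtP i j) => // Hij.
      - by move: (key _ _ Hij Hj); rewrite Heq eqxx.
      - by move: (key _ _ Hij Hi); rewrite Heq eqxx.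
    * by move=> x /mapP[p Hp ->]; rewrite mem_enum; exact: (Hsh _ Hp).1.
- case=> V1 [V2 [A1 [A2 [[[Hs1 Ha1 Hin1 _ Hc1] HU1] [[Hs2 Ha2 Hin2 _ Hc2] HU2] Hdj]]]].
  apply: (Hcol (fun v => (None, Some (inl v)) \in A1)).
  move=> e He Hmono.
  pose u : Dvert E := Some (inr (exist _ e He)).
  have HuU : u \in Dk_U E by rewrite inE.
  have ext : forall (Vi : {set Dvert E}) (Ai : {set Dvert E * Dvert E}),
      (forall a, a \in Ai -> Dk_arc a.1 a.2) ->
      (forall a, a \in Ai -> (a.1 \in Dk_s E |: Vi) && (a.2 \in Dk_s E |: Vi)) ->
      (forall v, v \in Vi -> #|[set a in Ai | a.2 == v]| = 1) ->
      Dk_U E \subset Dk_s E |: Vi ->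
      exists v, v \in e /\ (None, Some (inl v)) \in Ai.
    move=> Vi Ai Ha Hin Hc HU.
    have : u \in Dk_s E |: Vi by apply: (subsetP HU).
    rewrite !inE /= => Hu.
    have := Hc _ Hu; move/eqP/cards1P => [a Hae].
    have : a \in [set a in Ai | a.2 == u] by rewrite Hae inE.
    rewrite inE => /andP [HaA /eqP Hau].
    have := Ha _ HaA; rewrite Hau.
    clear Hae; case: a Hau HaA => [x b] /= -> HaA; case: x HaA => [[v|f]|] //= HaA Hv.
    have := Hin _ HaA; rewrite !inE /= => /andP[Hv1 _].
    have := Hc _ Hv1; move/eqP/cards1P => [b0 Hbe].
    have : b0 \in [set a in Ai | a.2 == Some (inl v)] by rewrite Hbe inE.
    rewrite inE => /andP [HbA /eqP Hbv].
    have := Ha _ HbA; rewrite Hbv.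
    clear Hbe; case: b0 Hbv HbA => [x c] /= -> HbA; case: x HbA => [[w|f]|] //= HbA _.
    by exists v.
  have [v1 [Hv1 HA1]] := ext _ _ Ha1 Hin1 Hc1 HU1.
  have [v2 [Hv2 HA2]] := ext _ _ Ha2 Hin2 Hc2 HU2.
  have := Hmono _ _ Hv1 Hv2; rewrite HA1.
  by rewrite (disjointFl Hdj HA2).
Qed.
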